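(* Let $x$ be sufficiently large, let $N$ be any integer, and let $y=\lfloor 0.08x\rfloor$. Then there is a residue class $b \bmod P(x)$ such that $$(S_x-b)\cap[-y,y]=\varnothing\quad\text{and}\quad (S_x-N+b)\cap[-y,y]=\varnothing .$$
   Context: $p$ always denotes a prime. For $x\ge 2$, $S_x=\{n\in\mathbb Z:\ n\not\equiv 0 \pmod p \text{ for every prime } p\le x\}$, and $P(x)=\prod_{p\le x}p$. For a set $S\subset\mathbb Z$ and an integer $t$, $S-t=\{s-t:s\in S\}$; since $S_x$ is $P(x)$-periodic, $S_x-b$ depends only on $b\bmod P(x)$. *)

(* Defs.v *)
From Stdlib Require Export Reals ZArith Znumtheory.
Open Scope R_scope.

Definition in_S (x : R) (n : Z) : Prop :=
  forall p : Z, prime p -> IZR p <= x -> ~ (p | n)%Z.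

Definition floorR (r : R) : Z := Int_part r.

(* Main.v *)
Require Import Defs.
From Stdlib Require Import Reals ZArith Znumtheory.
Open Scope R_scope.
From Stdlib Require Import Lia Lra Psatz List.

Definition cov (x : R) (t : Z) : Prop :=
  exists p : Z, Znumtheory.prime p /\ IZR p <= x /\ (p | t)%Z.

Lemma cov_notS x t : cov x t -> ~ in_S x t.
Proof. intros [p [hp [hx hd]]] H. exact (H p hp hx hd). Qed.

Lemma cleanup (x : R) (y N : Z) (L : list (bool * Z)) : forall (Q : list Z) (M b0 : Z),
  (0 < M)%Z ->
  (forall q, In q Q -> Znumtheory.prime q /\ IZR q <= x /\ ~ (q | M)%Z) ->
  NoDup Q ->
  (length L <= length Q)%nat ->
  (forall b, (M | b - b0)%Z -> forall n, (-y <= n <= y)%Z ->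
      (~ In (true, n) L -> cov x (n + b)%Z) /\ (~ In (false, n) L -> cov x (n + N - b)%Z)) ->
  exists b, forall n, (-y <= n <= y)%Z -> cov x (n + b)%Z /\ cov x (n + N - b)%Z.
Proof.
induction L as [|[s n0] L IH]; intros Q M b0 HM HQ HND Hlen Hcov.
- exists b0. intros n hn. assert (h0 : (M | b0 - b0)%Z) by (exists 0%Z; ring).
  destruct (Hcov b0 h0 n hn) as [h1 h2].
  split; [apply h1 | apply h2]; simpl; tauto.
- destruct Q as [|q0 Q]; [simpl in Hlen; lia|].
  destruct (HQ q0 (or_introl eq_refl)) as [hq0 [hq0x hq0M]].
  assert (hq1 : (1 < q0)%Z) by (destruct hq0; lia).
  assert (hrel : rel_prime M q0).
  { apply rel_prime_sym. apply prime_rel_prime; assumption. }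
  destruct (rel_prime_bezout _ _ hrel) as [u v huv].
  set (t := if s then (- n0)%Z else (n0 + N)%Z).
  set (b1 := (b0 + (t - b0) * u * M)%Z).
  apply (IH Q (M * q0)%Z b1).
  + nia.
  + intros q hq. destruct (HQ q (or_intror hq)) as [hp [hx hnd]].
    split; [exact hp|]. split; [exact hx|].
    intro hd. destruct (prime_mult q hp _ _ hd) as [h|h]; [exact (hnd h)|].
    assert (q = q0).
    { apply prime_div_prime; assumption. }
    subst q. inversion HND; contradiction.
  + inversion HND; assumption.
  + simpl in Hlen; lia.
  + intros b hb n hn.
    assert (hM : (M | b - b0)%Z).
    { destruct hb as [k hk]. exists (k * q0 + (t - b0) * u)%Z.
      assert (E : b = (k * (M * q0) + b1)%Z) by lia. rewrite E. unfold b1. ring. }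
    assert (hq : (q0 | b - t)%Z).
    { destruct hb as [k hk]. exists (k * M + (b0 - t) * v)%Z.
      assert (E : b = (k * (M * q0) + b1)%Z) by lia. rewrite E. unfold b1.
      assert (E2 : ((t - b0) * u * M = (t - b0) * (u * M))%Z) by ring.
      rewrite E2. assert (E3 : (u * M = 1 - v * q0)%Z) by lia. rewrite E3. ring. }
    destruct (Hcov b hM n hn) as [h1 h2].
    split; intro hnin.
    * destruct (Bool.bool_dec s true) as [es|es]; destruct (Z.eq_dec n n0) as [en|en].
      -- subst s n. exists q0. split; [exact hq0|]. split; [exact hq0x|].
         unfold t in hq. destruct hq as [k hk]. exists k. lia.
      -- apply h1. intros [e|e]; [injection e; intros; lia | exact (hnin e)].
      -- apply h1. intros [e|e]; [injection e; intros; subst; tauto | exact (hnin e)].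
      -- apply h1. intros [e|e]; [injection e; intros; subst; tauto | exact (hnin e)].
    * destruct (Bool.bool_dec s false) as [es|es]; destruct (Z.eq_dec n n0) as [en|en].
      -- subst s n. exists q0. split; [exact hq0|]. split; [exact hq0x|].
         unfold t in hq. destruct hq as [k hk]. exists (- k)%Z. lia.
      -- apply h2. intros [e|e]; [injection e; intros; lia | exact (hnin e)].
      -- apply h2. intros [e|e]; [injection e; intros; subst; tauto | exact (hnin e)].
      -- apply h2. intros [e|e]; [injection e; intros; subst; tauto | exact (hnin e)].
Qed.


Lemma ln_lt_self t : 0 < t -> ln t < t.
Proof.
intros ht. rewrite <- (ln_exp t) at 2. apply ln_increasing; [lra|].
pose proof (exp_ineq1_le t). lra.
Qed.

Lemma ln2_le1 : ln 2 <= 1.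
Proof.
rewrite <- ln_exp with 1. apply Rlt_le, ln_increasing; [lra|].
pose proof (exp_ineq1 1 R1_neq_R0). lra.
Qed.

Lemma final_ineq (t S P K z m : R) : 1000 <= t ->
  0 <= z -> z <= t^6 -> t^6 <= z + 1 ->
  K <= 16/100 * t^8 + 1 ->
  0 <= S -> S * ln (z + 1) <= 2 * K -> 0 <= P ->
  t^8 - 2 <= 2 * m -> 2 * m <= t^8 -> 1 <= m ->
  m * ln 4 <= ln (2 * m + 1) + P * ln (2 * m) ->
  S + z + 1 <= P.
Proof.
intros ht hz0 hz1 hz2 hK hS0 hS hP0 hm1 hm2 hm3 hP.
assert (ht0 : 0 < t) by lra.
set (lt := ln t).
assert (hlt0 : 0 < lt).
{ unfold lt. rewrite <- ln_1. apply ln_increasing; lra. }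
assert (hltt : lt < t) by (apply ln_lt_self; lra).
assert (hp6 : 0 < t^6) by (apply pow_lt; lra).
assert (hp8 : 0 < t^8) by (apply pow_lt; lra).
assert (hA : 6 * lt <= ln (z + 1)).
{ assert (e6 : ln (t^6) = 6 * lt) by (unfold lt; rewrite ln_pow by lra; replace (INR 6) with 6 by (simpl; lra); ring).
  rewrite <- e6.
  destruct (Req_dec (t^6) (z+1)) as [e|e]; [rewrite e; lra|].
  left; apply ln_increasing; lra. }
assert (hB : ln (2 * m) <= 8 * lt).
{ assert (e8 : ln (t^8) = 8 * lt) by (unfold lt; rewrite ln_pow by lra; replace (INR 8) with 8 by (simpl; lra); ring).
  rewrite <- e8.
  destruct (Req_dec (2*m) (t^8)) as [e|e]; [rewrite e; lra|].
  left; apply ln_increasing; lra. }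
assert (hC : ln (2 * m + 1) <= 1 + 8 * lt).
{ assert (ln (2 * m + 1) <= ln (2 * t^8)).
  { destruct (Req_dec (2*m+1) (2*t^8)) as [e|e]; [rewrite e; lra|].
    left; apply ln_increasing; lra. }
  rewrite ln_mult in H by lra.
  assert (e8 : ln (t^8) = 8 * lt) by (unfold lt; rewrite ln_pow by lra; replace (INR 8) with 8 by (simpl; lra); ring).
  pose proof ln2_le1. lra. }
assert (hD : 1 <= ln 4).
{ replace 4 with (2*2) by lra. rewrite ln_mult by lra. pose proof ln_lt_2. lra. }
assert (hPl : m - 1 - 8 * lt <= P * (8 * lt)).
{ assert (m <= m * ln 4) by nra.
  assert (P * ln (2 * m) <= P * (8 * lt)) by (apply Rmult_le_compat_l; lra). lra. }
assert (hSl : S * (6 * lt) <= 2 * K) by nra.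
assert (key : (S + z + 1) * (24 * lt) <= P * (24 * lt)).
{ assert (e1 : (S + z + 1) * (24 * lt) = 4 * (S * (6 * lt)) + 24 * lt * (z + 1)) by ring.
  rewrite e1.
  assert (e2 : P * (24 * lt) = 3 * (P * (8 * lt))) by ring. rewrite e2.
  assert (h1 : 24 * lt * (z + 1) <= 24 * t * (t^6 + 1)).
  { apply Rmult_le_compat; nra. }
  assert (h2 : 3 * (m - 1 - 8 * lt) >= 3 * ((t^8 - 2)/2 - 1 - 8 * t)) by nra.
  assert (h3 : 4 * (2 * K) <= 128/100 * t^8 + 8) by lra.
  assert (h4 : 24 * t * (t^6 + 1) + 128/100 * t^8 + 8 <= 3 * ((t^8 - 2)/2 - 1 - 8 * t)).
  { assert (t^8 = t * t^7) by ring. assert (t^7 = t * t^6) by ring.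
    assert (t^6 >= 1000) by (assert (t^6 = t * t^5) by ring; assert (1 <= t^5) by (apply pow_R1_Rle; lra); nra).
    assert (1000 * t^6 <= t^7) by nra.
    assert (1000 * t^7 <= t^8) by nra.
    nra. }
  lra. }
apply Rmult_le_reg_r with (24 * lt); lra.
Qed.

Fixpoint Hs (n : nat) : R := match n with O => 0 | S k => Hs k + / INR (S k) end.

Lemma Hs_ln n : ln (INR n + 1) <= Hs n.
Proof.
induction n as [|n IH].
- simpl. rewrite Rplus_0_l, ln_1. lra.
- change (Hs (S n)) with (Hs n + / INR (S n)). rewrite S_INR.
  assert (hn : 0 <= INR n) by apply pos_INR.
  assert (e : INR n + 1 + 1 = (INR n + 1) * (1 + / (INR n + 1))) by (field; lra).
  rewrite e, ln_mult; [| lra | ].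
  + assert (ln (1 + / (INR n + 1)) <= / (INR n + 1)).
    { pose proof (exp_ineq1_le (/ (INR n + 1))).
      rewrite <- (ln_exp (/ (INR n + 1))) at 2.
      destruct (Req_dec (1 + / (INR n + 1)) (exp (/ (INR n + 1)))) as [q|q]; [rewrite q; lra|].
      left; apply ln_increasing; [|lra].
      assert (0 < / (INR n + 1)) by (apply Rinv_0_lt_compat; lra). lra. }
    lra.
  + assert (0 < / (INR n + 1)) by (apply Rinv_0_lt_compat; lra). lra.
Qed.

From mathcomp Require Import all_boot.
From mathcomp Require Import zify.
From mathcomp Require Import cyclic.
Open Scope R_scope.


Open Scope nat_scope.


Lemma block_sum (f : nat -> nat) (m j : nat) :
  \sum_(0 <= u < j * m) f (u %% m) = j * \sum_(0 <= u < m) f (u %% m).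
Proof.
elim: j => [|j IH]; first by rewrite mul0n big_geq.
rewrite mulSn (big_cat_nat (n:=j*m)) ?leq_addl //= IH.
rewrite addnC; congr (_ + _).
rewrite -{1}[j * m]add0n big_addn addnK.
apply: eq_bigr => u _; by rewrite addnC modnMDl.
Qed.

Lemma tot_le (M k : nat) : 0 < k -> k %| M -> totient M <= k * totient (M %/ k).
Proof.
move=> k0 kM; set m := M %/ k.
have EM : M = k * m by rewrite /m mulnC divnK.
rewrite !totient_count_coprime.
have -> : \sum_(0 <= d < m) coprime m d = \sum_(0 <= d < m) coprime m (d %% m).
  by apply: eq_bigr => d _; rewrite coprime_modr.
rewrite -(block_sum (fun d => nat_of_bool (coprime m d))) -EM.
apply: leq_sum => u _; rewrite coprime_modr.
case H: (coprime M u) => //=.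
have mM : m %| M by rewrite EM dvdn_mull.
by rewrite (coprime_dvdl mM H).
Qed.


Lemma sum_tot_le (M z : nat) : 0 < M -> (forall k, 0 < k <= z -> k %| M) ->
  \sum_(1 <= k < z.+1) totient (M %/ k) <= M.
Proof.
move=> M0 hdv.
have E1 : \sum_(1 <= k < z.+1) totient (M %/ k) =
   \sum_(i <- [seq M %/ k | k <- iota 1 z]) totient i.
  by rewrite big_map /index_iota subn1.
rewrite E1 -[X in _ <= X](sum_totient_dvd M); clear E1.
rewrite -(big_mkord (fun d => d %| M)) -[X in _ <= X]big_filter.
apply: (@uniq_sub_le_big nat addn leq leqnn (fun x y => leq_addr y x)).
- rewrite map_inj_in_uniq ?iota_uniq //.
  move=> k1 k2; rewrite !mem_iota !add1n !ltnS => /andP[h1 h1'] /andP[h2 h2'] e.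
  have d1 : k1 %| M by apply: hdv; rewrite h1 h1'.
  have d2 : k2 %| M by apply: hdv; rewrite h2 h2'.
  have q0 : 0 < M %/ k1 by rewrite divn_gt0 // dvdn_leq.
  have := divnK d1; have := divnK d2; rewrite -e => e2 e1.
  by apply/eqP; rewrite -(eqn_pmul2l q0) e1 e2.
- by rewrite filter_uniq // iota_uniq.
- move=> d /mapP [k]; rewrite mem_iota add1n ltnS => /andP[h1 h2] ->.
  have dk : k %| M by apply: hdv; rewrite h1 h2.
  rewrite mem_filter mem_iota /= add0n ltnS leq_div andbT.
  by rewrite dvdn_div.
Qed.


Lemma sum_reindex (M : nat) (h : nat -> nat) (F : nat -> nat) :
  (forall b, b < M -> h b < M) ->
  (forall b b', b < M -> b' < M -> h b = h b' -> b = b') ->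
  \sum_(b < M) F (h b) = \sum_(b < M) F b.
Proof.
move=> hlt hinj.
pose h' (b : 'I_M) : 'I_M := Ordinal (hlt b (ltn_ord b)).
have inj' : injective h'.
  move=> b1 b2 e; apply: val_inj; apply: hinj; [exact: ltn_ord | exact: ltn_ord |].
  by have := congr1 val e.
by rewrite [RHS](reindex_inj inj').
Qed.

Definition gZ (M : nat) (t : Z) : bool := coprime M (Z.to_nat (t mod Z.of_nat M)).

Lemma modZ_inj (M : nat) (c : Z) (s : bool) b b' : 0 < M -> b < M -> b' < M ->
  Z.to_nat ((if s then c + Z.of_nat b else c - Z.of_nat b) mod Z.of_nat M)%Z =
  Z.to_nat ((if s then c + Z.of_nat b' else c - Z.of_nat b') mod Z.of_nat M)%Z -> b = b'.
Proof.
move=> M0 hb hb' e.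
have hM : (0 < Z.of_nat M)%Z by apply: (proj1 (Nat2Z.inj_lt 0 M)); apply/ltP.
have hb1 : (Z.of_nat b < Z.of_nat M)%Z by apply: (proj1 (Nat2Z.inj_lt _ _)); apply/ltP.
have hb2 : (Z.of_nat b' < Z.of_nat M)%Z by apply: (proj1 (Nat2Z.inj_lt _ _)); apply/ltP.
set u := (if s then _ else _) in e; set v := (if s then _ else _) in e.
have e' : (u mod Z.of_nat M = v mod Z.of_nat M)%Z.
  have := Z.mod_pos_bound u _ hM; have := Z.mod_pos_bound v _ hM. lia.
have d0 : ((u - v) mod Z.of_nat M = 0)%Z.
  by rewrite Zminus_mod e' Z.sub_diag Zmod_0_l.
have [k hk] : (Z.of_nat M | u - v)%Z.
  by apply/Z.mod_divide => //; lia.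
apply: Nat2Z.inj.
have hb0 := Nat2Z.is_nonneg b; have hb0' := Nat2Z.is_nonneg b'.
move: hk; rewrite /u /v; case: s {e e' d0 u v} => /= hk.
- have : (k = 0)%Z by nia.
  move=> k0; rewrite k0 in hk; lia.
- have : (k = 0)%Z by nia.
  move=> k0; rewrite k0 in hk; lia.
Qed.

Lemma sum_shift (M : nat) (c : Z) (s : bool) : 0 < M ->
  \sum_(b < M) gZ M (if s then c + Z.of_nat b else c - Z.of_nat b)%Z = totient M.
Proof.
move=> M0.
have hM : (0 < Z.of_nat M)%Z by apply: (proj1 (Nat2Z.inj_lt 0 M)); apply/ltP.
pose h b := Z.to_nat ((if s then c + Z.of_nat b else c - Z.of_nat b) mod Z.of_nat M)%Z.
have -> : \sum_(b < M) gZ M (if s then c + Z.of_nat b else c - Z.of_nat b)%Z =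
          \sum_(b < M) (fun r => nat_of_bool (coprime M r)) (h b) by [].
rewrite (@sum_reindex M h (fun r => nat_of_bool (coprime M r))).
- by rewrite totient_count_coprime big_mkord.
- move=> b _; rewrite /h; apply/ltP.
  have := Z.mod_pos_bound (if s then c + Z.of_nat b else c - Z.of_nat b)%Z _ hM. lia.
- move=> b b' hb hb'; exact: modZ_inj.
Qed.

Definition Ssurv (M K : nat) (y N : Z) (b : nat) : nat :=
  \sum_(i < K) (gZ M (Z.of_nat i - y + Z.of_nat b)%Z + gZ M (Z.of_nat i - y + N - Z.of_nat b)%Z).

Lemma avg_exists (M K : nat) (y N : Z) : 0 < M ->
  exists b, b < M /\ Ssurv M K y N b * M <= (K * 2) * totient M.
Proof.
move=> M0.
have tot : \sum_(b < M) Ssurv M K y N b = K * 2 * totient M.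
  rewrite /Ssurv exchange_big /=.
  rewrite (eq_bigr (fun _ => totient M * 2)).
    by rewrite sum_nat_const card_ord mulnA mulnAC.
  move=> i _; rewrite big_split /=.
  have h1 := sum_shift M (Z.of_nat i - y) true M0.
  have h2 := sum_shift M (Z.of_nat i - y + N) false M0.
  simpl in h1, h2; rewrite h1 h2; by rewrite muln2 addnn.
case: (boolP [exists b : 'I_M, Ssurv M K y N b * M <= K * 2 * totient M]).
  by move/existsP => [b hb]; exists b; split.
rewrite negb_exists => /forallP hall.
have : \sum_(b < M) (K * 2 * totient M).+1 <= \sum_(b < M) Ssurv M K y N b * M.
  apply: leq_sum => b _; have := hall b; by rewrite -ltnNge.
rewrite -big_distrl /= tot sum_nat_const card_ord.
move=> H; exfalso; move: H.
set A := K * 2 * totient M.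
rewrite mulnS [A * M]mulnC => H.
have : M <= 0 by rewrite -(leq_add2r (M * A)) add0n.
by rewrite leqNgt M0.
Qed.


Lemma prime_dvd_fact_le p n : prime p -> p %| n`! -> p <= n.
Proof.
move=> pp; rewrite fact_prod (Euclid_dvd_prod _ _ _ pp) big_has.
move/hasP => [i]; rewrite mem_index_iota => /andP[i1 i2] pi.
by apply: leq_trans (dvdn_leq i1 pi) _; rewrite -ltnS.
Qed.

Lemma sum_min (T n : nat) : \sum_(1 <= k < n.+1) (k <= T) = minn n T.
Proof.
elim: n => [|n IH]; first by rewrite big_geq // min0n.
rewrite big_nat_recr //= IH.
case: (leqP n.+1 T) => h /=; lia.
Qed.

Lemma div2_le (m d : nat) : 0 < d -> (2 * m) %/ d <= 2 * (m %/ d) + (d <= 2 * m).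
Proof.
move=> d0.
have e := divn_eq m d. have r := ltn_pmod m d0.
set q := m %/ d in e *; set r0 := m %% d in e r.
have : (2 * m) %/ d <= 2 * q + 1.
  rewrite -ltnS; rewrite ltn_divLR // e; lia.
case: (leqP d (2 * m)) => h /=; first by rewrite addn1.
move=> _; rewrite divn_small //; lia.
Qed.

Lemma logn_bin_le p m : prime p -> 0 < m -> logn p 'C(2 * m, m) <= trunc_log p (2 * m).
Proof.
move=> pp m0.
have p1 := prime_gt1 pp.
have hb := bin_fact (leq_pmull m (isT : 0 < 2)).
have hsub : 2 * m - m = m by lia.
rewrite hsub in hb.
have C0 : 0 < 'C(2 * m, m) by rewrite bin_gt0 leq_pmull.
have e : logn p 'C(2 * m, m) + 2 * logn p m`! = logn p (2 * m)`!.
  by rewrite -hb lognM ?muln_gt0 ?fact_gt0 // lognM ?fact_gt0 // addnn -mul2n.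
rewrite !logn_fact // in e.
have ext : \sum_(1 <= k < m.+1) m %/ p ^ k = \sum_(1 <= k < (2 * m).+1) m %/ p ^ k.
  rewrite [RHS](@big_cat_nat _ _ _ m.+1) //=; last by rewrite ltnS leq_pmull.
  rewrite [X in _ = _ + X]big1_seq ?addn0 // => k /andP[_]; rewrite mem_index_iota => /andP[hk _].
  rewrite divn_small //; apply: leq_trans (ltn_expl k p1); exact: ltnW hk.
rewrite ext in e.
set T := trunc_log p (2 * m).
have step : \sum_(1 <= k < (2 * m).+1) (2 * m) %/ p ^ k <=
   \sum_(1 <= k < (2 * m).+1) (2 * (m %/ p ^ k) + (k <= T)).
  apply: leq_sum => k _.
  have dk : 0 < p ^ k by rewrite expn_gt0 ltnW.
  have := div2_le m (p ^ k) dk.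
  case h: (p ^ k <= 2 * m) => /= H.
    by rewrite (trunc_log_max p1 h).
  by apply: leq_trans H _; rewrite addn0 leq_addr.
rewrite big_split /= sum_min -big_distrr /= in step.
lia.
Qed.

Lemma prod_const_seq (s : seq nat) (c : nat) : \prod_(i <- s) c = c ^ size s.
Proof. elim: s => [|a s IH]; by rewrite ?big_nil ?big_cons ?IH ?expnS. Qed.

Lemma bin_le m : 0 < m -> 'C(2 * m, m) <= (2 * m) ^ count prime (iota 0 (2 * m).+1).
Proof.
move=> m0.
have C0 : 0 < 'C(2 * m, m) by rewrite bin_gt0 leq_pmull.
have m2 : 0 < 2 * m by rewrite muln_gt0.
rewrite {1}(prod_prime_decomp C0) prime_decompE big_map /=.
apply: (@leq_trans ((2 * m) ^ size (primes 'C(2 * m, m)))).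
  rewrite -prod_const_seq big_seq [X in _ <= X]big_seq.
  apply: leq_prod => p; rewrite mem_primes => /and3P[pp _ _].
  apply: leq_trans (trunc_logP (prime_gt1 pp) m2).
  by rewrite leq_exp2l ?prime_gt1 // logn_bin_le.
apply: leq_pexp2l => //.
rewrite -size_filter; apply: uniq_leq_size; first exact: primes_uniq.
move=> p; rewrite mem_primes => /and3P[pp _ pd].
rewrite mem_filter pp mem_iota /= ltnS.
rewrite prime_gt0 //=; apply: prime_dvd_fact_le => //.
have hb := bin_fact (leq_pmull m (isT : 0 < 2)).
rewrite -hb; exact: dvdn_mulr.
Qed.

Lemma cbin m : 4 ^ m <= (2 * m).+1 * 'C(2 * m, m).
Proof.
elim: m => [|m IH]; first by rewrite bin0.
have rec : 'C(2 * m.+1, m.+1) * m.+1 = 2 * (2 * m).+1 * 'C(2 * m, m).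
  have h1 := bin_fact (leq_pmull m (isT : 0 < 2)).
  have h2 := bin_fact (leq_pmull m.+1 (isT : 0 < 2)).
  have e1 : 2 * m - m = m by lia.
  have e2 : 2 * m.+1 - m.+1 = m.+1 by lia.
  rewrite e1 in h1; rewrite e2 in h2.
  have e3 : 2 * m.+1 = (2 * m).+2 by lia.
  rewrite e3 !factS in h2. rewrite -h1 in h2.
  have f0 : 0 < m`! * m`! by rewrite muln_gt0 fact_gt0.
  apply/eqP; rewrite -(eqn_pmul2r f0) -(eqn_pmul2l (isT : 0 < m.+1)).
  apply/eqP; move: h2; set C1 := 'C(_, m.+1); set C0 := 'C(_, m); set F := m`!.
  move=> h2; rewrite e3 -/C1; nia.
have H : m.+1 * 4 ^ m.+1 <= m.+1 * ((2 * m.+1).+1 * 'C(2 * m.+1, m.+1)).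
  have E : (2 * m.+1).+1 * 'C(2 * m.+1, m.+1) * m.+1 = (2 * m.+1).+1 * (2 * (2 * m).+1 * 'C(2 * m, m)).
    by rewrite -mulnA rec.
  move: E IH; set C1 := 'C(2 * m.+1, m.+1); set C0 := 'C(2 * m, m); move=> E IH.
  rewrite expnS; nia.
by rewrite leq_mul2l /= in H.
Qed.



Open Scope R_scope.

Lemma INR_addn (a b : nat) : INR (a + b)%N = INR a + INR b.
Proof. exact (plus_INR a b). Qed.
Lemma INR_muln (a b : nat) : INR (a * b)%N = INR a * INR b.
Proof. exact (mult_INR a b). Qed.

Lemma tot_H (M z : nat) : (0 < M)%N -> (forall k, (0 < k <= z)%N -> (k %| M)%N) ->
  INR (totient M) * Hs z <= INR M.
Proof.
move=> M0 hdv.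
have gen : forall j, (j <= z)%N -> INR (totient M) * Hs j <= INR (\sum_(1 <= k < j.+1) totient (M %/ k)).
  elim=> [|j IH] hj.
    rewrite big_geq // Rmult_0_r; exact: pos_INR.
  rewrite big_nat_recr //= INR_addn.
  change (Hs j.+1) with (Hs j + / INR j.+1).
  rewrite Rmult_plus_distr_l.
  apply: Rplus_le_compat; first by apply: IH; apply: ltnW.
  have ht := tot_le M j.+1 (isT : (0 < j.+1)%N) (hdv j.+1 (ltac:(by rewrite hj))).
  move/leP: ht => ht; apply le_INR in ht; rewrite INR_muln in ht.
  have hj0 : 0 < INR j.+1 by apply: lt_0_INR; lia.
  apply (Rmult_le_reg_l (INR j.+1)) => //.
  rewrite -Rmult_assoc (Rmult_comm (INR j.+1)) Rmult_assoc Rinv_r ?Rmult_1_r; last lra.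
  exact: ht.
apply: Rle_trans (gen z (leqnn z)) _.
apply: le_INR; apply/leP; exact: sum_tot_le.
Qed.

Lemma len_filter_sum (f : nat -> bool) K :
  length (List.filter f (List.seq 0 K)) = \sum_(i < K) f i.
Proof.
elim: K => [|K IH]; first by rewrite big_ord0.
rewrite seq_S filter_app length_app IH big_ord_recr /=.
by case: (f K).
Qed.

Lemma len_filter_count (f : nat -> bool) a n :
  length (List.filter f (List.seq a n)) = count f (iota a n).
Proof.
elim: n a => [|n IH] a //=.
case: (f a) => /=; by rewrite IH.
Qed.

Lemma dvdZ_of d n : (d %| n)%N -> (Z.of_nat d | Z.of_nat n)%Z.
Proof.
move/dvdnP => [k ->]. exists (Z.of_nat k). lia.
Qed.

Lemma dvdZ_to d n : (Z.of_nat d | Z.of_nat n)%Z -> (d %| n)%N.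
Proof.
move=> [k hk].
case: (Z.le_gt_cases 0 k) => hk0.
  apply/dvdnP; exists (Z.to_nat k). nia.
case: n hk => [|n] hk; first by rewrite dvdn0.
nia.
Qed.

Lemma primeZ p : prime p -> Znumtheory.prime (Z.of_nat p).
Proof.
move=> pp; apply/prime_alt; split.
  have := prime_gt1 pp; lia.
move=> n hn hd.
have hn' : n = Z.of_nat (Z.to_nat n) by lia.
rewrite hn' in hd.
have hd' := dvdZ_to _ _ hd.
have hne : Z.to_nat n != 1%N by apply/eqP; lia.
have := prime_nt_dvdP pp hne; move/(_ hd') => e.
lia.
Qed.

Lemma cover_gZ (x : R) (z : nat) (t c : Z) : INR z <= x -> gZ (z`!) t = false ->
  (Z.of_nat (z`!) | c - t)%Z -> cov x c.
Proof.
move=> hzx hg hdiv.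
set M := (z`!)%N in hg hdiv.
have M0 : (0 < M)%N by exact: fact_gt0.
have MZ : (0 < Z.of_nat M)%Z by lia.
set r := Z.to_nat (t mod Z.of_nat M) in hg.
have hr : Z.of_nat r = (t mod Z.of_nat M)%Z.
  rewrite /r Z2Nat.id //; have := Z.mod_pos_bound t _ MZ; lia.
rewrite /gZ -/r in hg.
have g0 : (0 < gcdn M r)%N by rewrite gcdn_gt0 M0.
have g1 : (1 < gcdn M r)%N.
  move: hg; rewrite /coprime; case: (gcdn M r) g0 => [|[|g]] //.
set p := pdiv (gcdn M r).
have pp : prime p by apply: pdiv_prime.
have pg : (p %| gcdn M r)%N by apply: pdiv_dvd.
have pM : (p %| M)%N by apply: dvdn_trans pg (dvdn_gcdl _ _).
have pr : (p %| r)%N by apply: dvdn_trans pg (dvdn_gcdr _ _).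
have pz : (p <= z)%N by apply: prime_dvd_fact_le.
exists (Z.of_nat p); split; first exact: primeZ.
split.
  rewrite -INR_IZR_INZ; apply: Rle_trans hzx; apply: le_INR; exact/leP.
have hpM := dvdZ_of _ _ pM. have hpr := dvdZ_of _ _ pr.
rewrite hr in hpr.
have ht : (Z.of_nat p | t)%Z.
  rewrite (Z.div_mod t (Z.of_nat M)); last by lia.
  apply: Z.divide_add_r => //; exact: Z.divide_mul_l.
have hct : (Z.of_nat p | c - t)%Z by apply: Z.divide_trans hpM hdiv.
have -> : c = (t + (c - t))%Z by ring.
exact: Z.divide_add_r.
Qed.


Lemma floor_nonneg r : 0 <= r -> (0 <= Int_part r)%Z.
Proof.
move=> hr; have [h1 h2] := base_Int_part r.
have : (-1 < Int_part r)%Z by apply: lt_IZR; simpl; lra.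
lia.
Qed.

Lemma INR_to_nat_floor r : 0 <= r -> INR (Z.to_nat (Int_part r)) = IZR (Int_part r).
Proof.
move=> hr; rewrite INR_IZR_INZ Z2Nat.id //; exact: floor_nonneg.
Qed.

Lemma INR_expn (a n : nat) : INR (a ^ n)%N = INR a ^ n.
Proof. elim: n => [|n IH]; first by rewrite expn0. by rewrite expnS INR_muln IH. Qed.

Lemma Hs_nonneg n : 0 <= Hs n.
Proof.
elim: n => [|n IH]; first by simpl; lra.
change (Hs n.+1) with (Hs n + / INR n.+1).
have : 0 < / INR n.+1 by apply: Rinv_0_lt_compat; apply: lt_0_INR; lia.
lra.
Qed.

Theorem mainTheorem3 :
  exists X0 : R, forall x : R, X0 <= x ->
    forall N : Z,
    exists b : Z,
      forall n : Z,
        (- floorR (8 / 100 * x) <= n <= floorR (8 / 100 * x))%Z ->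
        ~ in_S x (n + b)%Z /\ ~ in_S x (n + N - b)%Z.
Proof.
exists (1000 ^ 8) => x hx N.
have hx0 : 0 < x by nra.
set t := sqrt (sqrt (sqrt x)).
have ht0 : 0 <= t by apply: sqrt_pos.
have ht8 : t ^ 8 = x.
  have e : t ^ 8 = ((t * t) * (t * t)) * ((t * t) * (t * t)) by ring.
  rewrite e /t sqrt_sqrt; last exact: sqrt_pos.
  rewrite sqrt_sqrt; last exact: sqrt_pos.
  rewrite sqrt_sqrt //; lra.
have ht : 1000 <= t.
  have s1 : 1000 ^ 4 <= sqrt x.
    rewrite -(sqrt_pow2 (1000 ^ 4)); last lra.
    apply: sqrt_le_1_alt; lra.
  have s2 : 1000 ^ 2 <= sqrt (sqrt x).
    rewrite -(sqrt_pow2 (1000 ^ 2)); last lra.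
    apply: sqrt_le_1_alt; lra.
  rewrite /t -(sqrt_pow2 1000); last lra.
  apply: sqrt_le_1_alt; lra.
have ht6 : 0 <= t ^ 6 by apply: pow_le.
have ht68 : t ^ 6 <= t ^ 8 - 2.
  have : t ^ 8 = t ^ 6 * (t * t) by ring.
  have : 1 <= t ^ 6 by apply: pow_R1_Rle; lra.
  have : 3 <= t * t by nra.
  nra.
set Y := floorR (8 / 100 * x).
have hY0 : (0 <= Y)%Z by apply: floor_nonneg; lra.
have hY : IZR Y <= 8 / 100 * x by have := base_Int_part (8 / 100 * x); rewrite /Y /floorR; lra.
set X := Z.to_nat (floorR x).
have hX : INR X <= x /\ x - 1 < INR X.
  rewrite /X /floorR INR_to_nat_floor; last lra.
  have := base_Int_part x; lra.
set z := Z.to_nat (Int_part (t ^ 6)).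
have hz : INR z <= t ^ 6 /\ t ^ 6 < INR z + 1.
  rewrite /z INR_to_nat_floor //.
  have := base_Int_part (t ^ 6); lra.
set M := (z`!)%N.
have M0 : (0 < M)%N by exact: fact_gt0.
set K := Z.to_nat (2 * Y + 1).
have hK : INR K = 2 * IZR Y + 1.
  rewrite /K INR_IZR_INZ Z2Nat.id; last lia.
  rewrite plus_IZR mult_IZR; simpl; lra.
have [b0 [hb0 hS]] := avg_exists M K Y N M0.
set S := Ssurv M K Y N b0.
have hSr : INR S * ln (INR z + 1) <= 2 * INR K.
  have hdv : forall k, (0 < k <= z)%N -> (k %| M)%N by move=> k hk; exact: dvdn_fact.
  have hT := tot_H M z M0 hdv.
  have hSn : INR S * INR M <= INR K * 2 * INR (totient M).
    move/leP: hS => hS; apply le_INR in hS.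
    by rewrite !INR_muln in hS.
  have hM0 : 0 < INR M by apply: lt_0_INR; apply/ltP.
  have hH := Hs_ln z.
  have hS0 : 0 <= INR S by apply: pos_INR.
  have hK0 : 0 <= INR K by apply: pos_INR.
  have hT0 : 0 <= INR (totient M) by apply: pos_INR.
  have hHs : INR S * Hs z <= 2 * INR K.
    apply: (Rmult_le_reg_r (INR M)) => //.
    have hHs0 := Hs_nonneg z.
    have : INR S * INR M * Hs z <= INR K * 2 * INR (totient M) * Hs z.
      by apply: Rmult_le_compat_r.
    have : INR K * 2 * (INR (totient M) * Hs z) <= INR K * 2 * INR M.
      apply: Rmult_le_compat_l => //; lra.
    nra.
  apply: Rle_trans hHs; apply: Rmult_le_compat_l => //.
set m := (X %/ 2)%N.
have hm1 : (2 * m <= X)%N by rewrite /m; lia.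
have hm2 : (X <= 2 * m + 1)%N by rewrite /m; lia.
have hX2 : (2 < X)%N.
  apply/ltP; apply: INR_lt; rewrite /=; lra.
have m1 : (0 < m)%N by lia.
set P := count prime (iota 0 (2 * m).+1).
have hcheb : (4 ^ m <= (2 * m).+1 * (2 * m) ^ P)%N.
  apply: leq_trans (cbin m) _; rewrite leq_mul2l; apply/orP; right; exact: bin_le.
have hmR : 1 <= INR m by rewrite -/(INR 1); apply: le_INR; apply/leP.
have hchebR : INR m * ln 4 <= ln (2 * INR m + 1) + INR P * ln (2 * INR m).
  move/leP: hcheb => hcheb; apply le_INR in hcheb.
  rewrite INR_muln !INR_expn in hcheb.
  have e2 : INR (2 * m)%N = 2 * INR m by rewrite INR_muln.
  have e4 : INR 4 = 4 by simpl; lra.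
  rewrite e2 e4 S_INR e2 in hcheb.
  have p1 : 0 < 4 ^ m by apply: pow_lt; lra.
  have p2 : 0 < (2 * INR m) ^ P by apply: pow_lt; lra.
  rewrite -ln_pow; last lra.
  rewrite -ln_pow; last lra.
  rewrite -ln_mult; [| lra | lra].
  destruct (Req_dec (4 ^ m) ((2 * INR m + 1) * (2 * INR m) ^ P)) as [q|q]; first by rewrite q; lra.
  left; apply: ln_increasing => //; lra.
have hzX : (z < X)%N.
  apply/ltP; apply: INR_lt; lra.
set Qn := List.filter prime (List.seq z.+1 (X - z)).
have hcount : (P <= z.+1 + length Qn)%N.
  rewrite /Qn len_filter_count /P.
  have e1 : X.+1 = ((2 * m).+1 + (X - 2 * m))%N by lia.
  apply: (@leq_trans (count prime (iota 0 X.+1))).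
    by rewrite e1 iotaD count_cat leq_addr.
  have e3 : X.+1 = (z.+1 + (X - z))%N by lia.
  rewrite e3 iotaD count_cat add0n leq_add2r.
  by apply: leq_trans (count_size _ _) _; rewrite size_iota.
have hSQ : (S <= length Qn)%N.
  have := final_ineq t (INR S) (INR P) (INR K) (INR z) (INR m) ht (pos_INR z) (proj1 hz).
  move=> H.
  have hPS : INR S + INR z + 1 <= INR P.
    apply: H; try lra; try exact: pos_INR.
    - have : INR X <= 2 * INR m + 1.
        have := le_INR _ _ (ssrnat.leP hm2); rewrite INR_addn INR_muln; simpl; lra.
      lra.
    - have : 2 * INR m <= INR X.
        have := le_INR _ _ (ssrnat.leP hm1); rewrite INR_muln; simpl; lra.
      lra.
  have := le_INR _ _ (ssrnat.leP hcount); rewrite INR_addn S_INR => hc.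
  apply/leP; apply: INR_le; lra.
pose gA := fun i : nat => gZ M (Z.of_nat i - Y + Z.of_nat b0)%Z.
pose gB := fun i : nat => gZ M (Z.of_nat i - Y + N - Z.of_nat b0)%Z.
pose LA := List.map (fun i : nat => (true, (Z.of_nat i - Y)%Z)) (List.filter gA (List.seq 0 K)).
pose LB := List.map (fun i : nat => (false, (Z.of_nat i - Y)%Z)) (List.filter gB (List.seq 0 K)).
pose L := LA ++ LB.
have hL : length L = S.
  rewrite /L length_app /LA /LB !length_map !len_filter_sum /S /Ssurv big_split.
  by [].
pose QZ := List.map Z.of_nat Qn.
have hzx : INR z <= x by lra.
have [b hb] : exists b : Z, forall n : Z, (- Y <= n <= Y)%Z -> cov x (n + b)%Z /\ cov x (n + N - b)%Z.
  apply: (cleanup x Y N L QZ (Z.of_nat M) (Z.of_nat b0)).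
  - lia.
  - move=> q hq.
    apply in_map_iff in hq; case: hq => [q' [hq'1 hq']]; subst q.
    apply filter_In in hq'; case: hq' => [hq1 hq2]; apply in_seq in hq1.
    split; first exact: primeZ.
    split.
      rewrite -INR_IZR_INZ; apply: Rle_trans (proj1 hX); apply: le_INR; lia.
    move=> hd; have := dvdZ_to _ _ hd => hd'.
    have := prime_dvd_fact_le q' z hq2 hd'. lia.
  - apply: NoDup_map_NoDup_ForallPairs.
      move=> a c _ _ e; lia.
    apply: NoDup_filter; exact: seq_NoDup.
  - rewrite /QZ length_map hL; exact/leP.
  - move=> b hb n hn.
    set i := Z.to_nat (n + Y).
    have hi : (i < K)%coq_nat by rewrite /i /K; lia.
    have hn' : n = (Z.of_nat i - Y)%Z by rewrite /i; lia.
    split => hnin.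
    + case hg: (gA i).
        exfalso; apply: hnin; apply: in_or_app; left; apply/in_map_iff.
        exists i; split; first by rewrite -hn'.
        apply/filter_In; split => //; apply/in_seq; lia.
      apply: (cover_gZ x z (n + Z.of_nat b0)%Z (n + b)%Z hzx).
        by rewrite hn'.
      have -> : (n + b - (n + Z.of_nat b0) = b - Z.of_nat b0)%Z by ring.
      exact: hb.
    + case hg: (gB i).
        exfalso; apply: hnin; apply: in_or_app; right; apply/in_map_iff.
        exists i; split; first by rewrite -hn'.
        apply/filter_In; split => //; apply/in_seq; lia.
      apply: (cover_gZ x z (n + N - Z.of_nat b0)%Z (n + N - b)%Z hzx).
        by rewrite hn'.
      have -> : (n + N - b - (n + N - Z.of_nat b0) = - (b - Z.of_nat b0))%Z by ring.
      by apply/Z.divide_opp_r.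
exists b => n hn; have [h1 h2] := hb n hn; split; exact: cov_notS.
Qed.
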